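(* Let $T\colon[0,1)\to[0,1)$ be an interval exchange transformation and $\lambda$ Lebesgue measure. Then $C_\psi(T)\le\tfrac12$, where \[C_\psi(T)=\sup\big(\{0\}\cup\{\alpha>0:\ \liminf_{n\to\infty}n^\alpha|T^nx-T^ny|=0\text{ for }\lambda\times\lambda\text{-a.e. }(x,y)\}\big).\]
   Context: An $r$-interval exchange transformation is given by a permutation $\pi$ of $\{1,\dots,r\}$ and lengths $\ell_i>0$ with $\sum\ell_i=1$: with $s_0=0$, $s_k=\sum_{i\le k}\ell_i$, $I_k=[s_{k-1},s_k)$, one sets $T(x)=x-\sum_{i<k}\ell_i+\sum_{\pi(i')<\pi(k)}\ell_{i'}$ for $x\in I_k$. *)

(* Defs.v *)
From HB Require Import structures.
From mathcomp Require Import all_boot all_order all_algebra all_fingroup.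
From mathcomp Require Import all_classical all_reals all_analysis.
Set Implicit Arguments. Unset Strict Implicit. Unset Printing Implicit Defensive.
Import Order.TTheory GRing.Theory Num.Theory.
Local Open Scope ring_scope.

(* Interval exchange transformation data: r intervals (indexed 0..r-1 instead of
   1..r), a permutation pi of 'I_r, positive lengths l summing to 1.
   I_k = [ \sum_{i<k} l_i , \sum_{i<=k} l_i ) and on I_k,
   T x = x - \sum_{i<k} l_i + \sum_{pi i' < pi k} l_{i'}.
   T is a function R -> R; only its values on [0,1) matter. *)
Definition is_iet_data (R : realType) (r : nat) (pi : {perm 'I_r}) (l : 'I_r -> R)
  (T : R -> R) : Prop :=
  (forall i, 0 < l i) /\ (\sum_(i < r) l i = 1) /\
  forall (k : 'I_r) (x : R),
    \sum_(i < r | (i < k)%N) l i <= x < \sum_(i < r | (i <= k)%N) l i ->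
    T x = x - \sum_(i < r | (i < k)%N) l i + \sum_(i' < r | (pi i' < pi k)%N) l i'.

Definition is_iet (R : realType) (T : R -> R) : Prop :=
  exists (r : nat) (pi : {perm 'I_r}) (l : 'I_r -> R), is_iet_data pi l T.

Definition C_psi (R : realType) (T : R -> R) : \bar R :=
  ereal_sup ([set 0%E] `|`
    [set (a%:E) | a in [set a : R | 0 < a /\
      {ae ((@lebesgue_measure R) \x (@lebesgue_measure R))%E,
         forall z : R * R, (0 <= z.1 < 1) -> (0 <= z.2 < 1) ->
           limn_einf (fun n : nat =>
             ((n%:R `^ a) * `|iter n T z.1 - iter n T z.2|)%:E) = 0%E}]]%classic).

(* Main.v *)
Require Import Defs.
From HB Require Import structures.
From mathcomp Require Import all_boot all_order all_algebra all_fingroup.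
From mathcomp Require Import all_classical all_reals all_analysis.
From mathcomp Require Import ring lra zify.
From Stdlib Require Import Lia.
Set Implicit Arguments. Unset Strict Implicit. Unset Printing Implicit Defensive.
Import Order.TTheory GRing.Theory Num.Theory.
Local Open Scope ring_scope.
Local Open Scope classical_set_scope.

Lemma sum_sub (R : realType) n (f : 'I_n -> R) (P Q : pred 'I_n) :
  (forall i, 0 <= f i) -> (forall i, P i -> Q i) ->
  \sum_(i < n | P i) f i <= \sum_(i < n | Q i) f i.
Proof.
move=> f0 PQ; rewrite [X in _ <= X](bigID P) /=.
have -> : \sum_(i < n | Q i && P i) f i = \sum_(i < n | P i) f i.
  by apply: eq_bigl => i; case: (boolP (P i)) => Pi; rewrite ?andbT ?andbF ?PQ.
by rewrite lerDl sumr_ge0.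
Qed.

Lemma sum_le_split (R : realType) n (f : 'I_n -> R) (k : 'I_n) :
  \sum_(i < n | (i <= k)%N) f i = \sum_(i < n | (i < k)%N) f i + f k.
Proof.
rewrite (bigD1 k) //= addrC; congr (_ + _); apply: eq_bigl => i.
by rewrite ltn_neqAle andbC.
Qed.

Lemma sum_pi_split (R : realType) n (pi : {perm 'I_n}) (f : 'I_n -> R) (k : 'I_n) :
  \sum_(i < n | (pi i <= pi k)%N) f i = \sum_(i < n | (pi i < pi k)%N) f i + f k.
Proof.
rewrite (bigD1 k) //= addrC; congr (_ + _); apply: eq_bigl => i.
rewrite ltn_neqAle andbC; congr (_ && _).
by rewrite (inj_eq val_inj) (inj_eq (@perm_inj _ pi)).
Qed.

Definition psum (R : realType) n (l : 'I_n -> R) (m : nat) := \sum_(i < n | (i < m)%N) l i.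

Lemma psumS (R : realType) n (l : 'I_n -> R) m (Hm : (m < n)%N) :
  psum l m.+1 = psum l m + l (Ordinal Hm).
Proof.
rewrite /psum (bigD1 (Ordinal Hm)) //= addrC; congr (_ + _); apply: eq_bigl => i.
by rewrite ltnS ltn_neqAle andbC -(inj_eq val_inj).
Qed.

Lemma psum_n (R : realType) n (l : 'I_n -> R) : psum l n = \sum_(i < n) l i.
Proof. by apply: eq_bigl => i; rewrite ltn_ord. Qed.

Lemma cover_lem (R : realType) n (l : 'I_n -> R) (x : R) :
  forall m, (m <= n)%N -> x < psum l m -> 0 <= x ->
  exists k : 'I_n, psum l k <= x < psum l k + l k.
Proof.
elim=> [|m IH] Hm.
  by rewrite /psum big_pred0 // => /lt_le_trans h /h; rewrite ltxx.
move=> xlt x0.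
have [xm|xm] := ltP x (psum l m); first exact: IH (ltnW Hm) xm x0.
exists (Ordinal Hm) => /=; rewrite xm /=.
by rewrite -psumS.
Qed.
Definition sg (R : realType) r (pi : {perm 'I_r}) (l : 'I_r -> R) (k : 'I_r) :=
  \sum_(i' < r | (pi i' < pi k)%N) l i'.

Section IET.
Context (R : realType) (r : nat) (pi : {perm 'I_r}) (l : 'I_r -> R) (T : R -> R).
Hypothesis H : is_iet_data pi l T.

Lemma l_gt0 i : 0 < l i. Proof. by case: H. Qed.
Lemma l_sum : \sum_(i < r) l i = 1. Proof. by case: H => _ []. Qed.

Lemma T_eq (k : 'I_r) x : psum l k <= x < psum l k + l k ->
  T x = x + (sg pi l k - psum l k).
Proof.
case: H => _ [_ HT] hx; rewrite (HT k) /sg /psum; last by rewrite sum_le_split.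
rewrite -addrA; congr (_ + _); by rewrite addrC.
Qed.

Lemma coverI x : 0 <= x < 1 -> exists k : 'I_r, psum l k <= x < psum l k + l k.
Proof.
move=> /andP[x0 x1]; apply: (@cover_lem R r l x r) => //.
by rewrite psum_n l_sum.
Qed.

Lemma sg_ge0 k : 0 <= sg pi l k.
Proof. by apply: sumr_ge0 => i _; exact: ltW (l_gt0 i). Qed.

Lemma sg_le1 k : sg pi l k + l k <= 1.
Proof.
rewrite /sg -sum_pi_split -l_sum.
by apply: (@sum_sub _ _ _ _ predT) => // i; exact: ltW (l_gt0 i).
Qed.

Lemma sg_order i j : (pi i < pi j)%N -> sg pi l i + l i <= sg pi l j.
Proof.
move=> ij; rewrite /sg -sum_pi_split; apply: sum_sub => [i'|i' h].
  exact: ltW (l_gt0 i').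
exact: leq_ltn_trans h ij.
Qed.

Lemma T_J (k : 'I_r) x : psum l k <= x < psum l k + l k ->
  sg pi l k <= T x < sg pi l k + l k.
Proof.
move=> hx; rewrite (T_eq hx); move: hx => /andP[h1 h2].
apply/andP; split.
  by rewrite addrCA lerDl subr_ge0.
by rewrite addrCA ltrD2l ltrBlDr addrC.
Qed.

Lemma TU x : 0 <= x < 1 -> 0 <= T x < 1.
Proof.
move=> /coverI[k hk]; have /andP[h1 h2] := T_J hk.
rewrite (le_trans (sg_ge0 k) h1) /=.
exact: lt_le_trans h2 (sg_le1 k).
Qed.

Lemma iterU n x : 0 <= x < 1 -> 0 <= iter n T x < 1.
Proof. by move=> hx; elim: n => //= n IH; exact: TU. Qed.

End IET.
Section IET2.
Context (R : realType) (r : nat) (pi : {perm 'I_r}) (l : 'I_r -> R) (T : R -> R).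
Hypothesis H : is_iet_data pi l T.

Definition inI (j : 'I_r) (u : R) := (psum l j <= u) && (u < psum l j + l j).

Lemma sep_lem (i j : 'I_r) u v eps : inI i u -> inI j v -> i != j ->
  `|T u - T v| < eps -> exists e : 'I_r,
    (sg pi l e - eps < T u < sg pi l e + eps) /\ (sg pi l e - eps < T v < sg pi l e + eps).
Proof.
move=> hu hv ij; rewrite ltr_norml => /andP[h1 h2].
have /andP[u1 u2] := T_J H hu; have /andP[v1 v2] := T_J H hv.
have pij : pi i != pi j by rewrite (inj_eq (@perm_inj _ pi)).
case: (ltngtP (pi i) (pi j)) => [lt|lt|eq]; last by move: pij; rewrite (val_inj eq) eqxx.
- have := sg_order H lt => hs; exists j; rewrite !lterBDr.
  by split; apply/andP; split; lra.
- have := sg_order H lt => hs; exists i; rewrite !lterBDr.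
  by split; apply/andP; split; lra.
Qed.

Lemma last_change x y : forall n,
  iter n T x - iter n T y = x - y \/
  exists k, (k < n)%N /\ ~~ [exists j, inI j (iter k T x) && inI j (iter k T y)] /\
     iter k.+1 T x - iter k.+1 T y = iter n T x - iter n T y.
Proof.
elim=> [|n IH]; first by left.
case: (boolP [exists j, inI j (iter n T x) && inI j (iter n T y)]) => [/existsP[j /andP[hx hy]]|hn].
  have e : iter n.+1 T x - iter n.+1 T y = iter n T x - iter n T y.
    rewrite /= (T_eq H hx) (T_eq H hy); lra.
  rewrite e; case: IH => [->|[k [kn [hk e2]]]]; first by left.
  by right; exists k; split => //; exact: ltnW.
by right; exists n; split.
Qed.

End IET2.
Lemma subadd_ord d (T : measurableType d) (R : realType)
  (mu : {measure set T -> \bar R}) n (F : 'I_n -> set T) (A : set T) :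
  measurable A -> (forall i, measurable (F i)) ->
  A `<=` \big[setU/set0]_(i < n) F i -> (mu A <= \sum_(i < n) mu (F i))%E.
Proof.
move=> mA mF AF.
pose G (k : nat) := \big[setU/set0]_(i < n | val i == k) F i.
have GE (i : 'I_n) : G i = F i.
  by rewrite /G (big_pred1 i) // => j /=; rewrite (inj_eq val_inj).
have := @content_subadditive _ _ _ mu A G n.
rewrite (eq_bigr (fun i : 'I_n => mu (F i))); last by move=> i _; rewrite GE.
apply => //.
  by move=> k _; apply: bigsetU_measurable => i _; exact: mF.
move=> x /AF; rewrite (eq_bigr (fun i : 'I_n => G i)); last by move=> i _; rewrite GE.
by rewrite -!bigcup_mkord.
Qed.

Lemma leb_shift (R : realType) (c : R) (A : set R) : measurable A ->
  lebesgue_measure ((fun x => x + c) @^-1` A) = lebesgue_measure A.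
Proof.
move=> mA.
have mf : measurable_fun [set: R] (fun x : R => x + c).
  by apply: measurable_realfun.measurable_funD => //; apply: measurable_cst.
unshelve epose proof (@lebesgue_measure_unique R (@pushforward _ _ (measurableTypeR R) (measurableTypeR R) R lebesgue_measure (fun x : R => x + c) : measure (measurableTypeR R) R)) as H.
  exact: mf.
rewrite (H _ _ mA) //.
move=> X [[a b] _ <-] /=.
rewrite /pushforward.
have -> : (fun x : R => x + c) @^-1` `]a, b] = `]a - c, b - c].
  apply/seteqP; split => x /=; rewrite !in_itv /= ltrBlDr lerBrDr //.
rewrite !lebesgue_measure_itv /= !lte_fin ltrD2r.
by case: ifP => // _; congr (_%:E); rewrite opprB addrA subrK.
Qed.

Lemma shift_meas (R : realType) (c : R) (A : set R) : measurable A ->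
  measurable ((fun x => x + c) @^-1` A).
Proof.
move=> mA.
have mf : measurable_fun [set: R] (fun x : R => x + c).
  by apply: measurable_realfun.measurable_funD => //; apply: measurable_cst.
by rewrite -[X in measurable X]setTI; apply: mf.
Qed.
Lemma bigsetU_ordP (T : Type) n (F : 'I_n -> set T) x :
  (\big[setU/set0]_(i < n) F i) x <-> exists i, F i x.
Proof.
rewrite (eq_bigl (fun i => i \in (@predT 'I_n))) // -bigcup_pred.
by split => [[i _ h]|[i h]]; exists i.
Qed.

Section Pre.
Context (R : realType) (r : nat) (pi : {perm 'I_r}) (l : 'I_r -> R) (T : R -> R).
Hypothesis H : is_iet_data pi l T.

Definition tau (k : 'I_r) := sg pi l k - psum l k.
Definition Jk (k : 'I_r) : set R := `[sg pi l k, sg pi l k + l k[.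
Definition Pre (B : set R) : set R :=
  \big[setU/set0]_(k < r) ((fun x => x + tau k) @^-1` (Jk k `&` B)).

Lemma Pre_meas B : measurable B -> measurable (Pre B).
Proof.
move=> mB; apply: bigsetU_measurable => k _; apply: shift_meas.
by apply: measurableI => //; exact: measurable_itv.
Qed.

Lemma Pre_mem B x : 0 <= x < 1 -> B (T x) -> Pre B x.
Proof.
move=> /(coverI H)[k hk] hB.
rewrite /Pre bigsetU_ordP; exists k => /=.
have e := T_eq H hk; rewrite /tau -e; split => //.
rewrite /Jk /= in_itv /=; exact: (T_J H hk).
Qed.

Lemma Jk_triv B : trivIset setT (fun k => Jk k `&` B).
Proof.
apply/trivIsetP => i j _ _ ij; apply/seteqP; split => // x [[hi _] [hj _]].
move: hi hj; rewrite /Jk /= !in_itv /= => /andP[a1 a2] /andP[b1 b2].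
have pij : pi i != pi j by rewrite (inj_eq (@perm_inj _ pi)).
case: (ltngtP (pi i) (pi j)) => [lt|lt|eq]; last by move: pij; rewrite (val_inj eq) eqxx.
- by have := sg_order H lt; lra.
- by have := sg_order H lt; lra.
Qed.

Lemma Pre_le B : measurable B -> (lebesgue_measure (Pre B) <= lebesgue_measure B)%E.
Proof.
move=> mB.
have mJ k : measurable (Jk k `&` B) by apply: measurableI => //; exact: measurable_itv.
apply: (le_trans (@subadd_ord _ _ _ lebesgue_measure r (fun k => (fun x => x + tau k) @^-1` (Jk k `&` B)) _ (Pre_meas mB) _ _)).
- by move=> k; apply: shift_meas.
- by [].
rewrite (eq_bigr (fun k => lebesgue_measure (Jk k `&` B))); last first.
  by move=> k _; apply: leb_shift.
rewrite -measure_bigsetU_ord //; last exact: Jk_triv.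
apply: le_measure; rewrite ?inE.
- by apply: bigsetU_measurable => i _; exact: mJ.
- exact: mB.
- by move=> x; rewrite bigsetU_ordP => -[k []].
Qed.

Lemma PreN_meas n B : measurable B -> measurable (iter n Pre B).
Proof. by move=> mB; elim: n => //= n IH; exact: Pre_meas. Qed.

Lemma PreN_le n B : measurable B ->
  (lebesgue_measure (iter n Pre B) <= lebesgue_measure B)%E.
Proof.
move=> mB; elim: n => //= n IH.
exact: le_trans (Pre_le (PreN_meas n mB)) IH.
Qed.

Lemma PreN_mem n B x : 0 <= x < 1 -> B (iter n T x) -> iter n Pre B x.
Proof.
elim: n x => // n IH x hx; rewrite iterSr => hB /=.
by apply: Pre_mem => //; apply: IH => //; exact: (TU H hx).
Qed.

End Pre.
Lemma powR_natX (R : realType) (x b : R) m : 0 <= x ->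
  (x ^+ m) `^ b = (x `^ b) ^+ m.
Proof.
move=> x0; rewrite -powR_mulrn // -powRrM mulrC powRrM powR_mulrn //.
exact: powR_ge0.
Qed.

Lemma powB (R : realType) (a : R) (L : nat) : 1 <= L%:R * (2 * a - 1) ->
  forall m, (2 ^ m * (2 ^ L) ^ m)%:R <= (((2 ^ L) ^ m)%:R : R) `^ (2 * a).
Proof.
move=> hL m.
set b : R := (2 ^ L)%:R.
have b0 : 0 <= b by [].
have bge1 : 1 <= b by rewrite /b natrX exprn_ege1 // ler1n.
have h2b : 2 * b <= b `^ (2 * a).
  have -> : 2 * a = 1 + (2 * a - 1) by rewrite addrC subrK.
  rewrite powRD; last by apply/implyP => _; rewrite gt_eqF // (lt_le_trans ltr01 bge1).
  rewrite powRr1 // mulrC ler_pM2l ?(lt_le_trans ltr01 bge1) //.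
  rewrite /b natrX -powR_mulrn // -powRrM.
  apply: (le_trans _ (@ler_powR _ 2 _ _ _ hL)); first by rewrite powRr1.
  by rewrite ler1n.
rewrite natrM !natrX -/b powR_natX //.
rewrite -exprMn; apply: lerXn2r => //.
- by rewrite nnegrE mulr_ge0.
- by rewrite nnegrE powR_ge0.
by move: h2b; rewrite /b natrX.
Qed.
Lemma einf0_lt1 (R : realType) (u : (\bar R)^nat) : limn_einf u = 0%E ->
  forall N, exists2 n, (N <= n)%N & (u n < 1)%E.
Proof.
move=> h N.
have : (einfs u N <= 0)%E.
  rewrite -h limn_einf_lim (cvg_lim _ (@cvg_einfs_sup _ u)) //.
  by apply: le_ereal_sup_tmp; exists (einfs u N) => //; exists N.
move=> /le_lt_trans /(_ lte01) /ereal_inf_lt [y [n /= Nn <-] hn].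
by exists n.
Qed.


Lemma mu_rect (R : realType) (A B : set R) : measurable A -> measurable B ->
  ((@lebesgue_measure R) \x (@lebesgue_measure R))%E (A `*` B) = (lebesgue_measure A * lebesgue_measure B)%E.
Proof. by move=> mA mB; rewrite product_measure1E. Qed.

Lemma leb_ball (R : realType) (c e : R) : 0 <= e ->
  (lebesgue_measure (`](c - e)%R, (c + e)%R[%classic : set R) <= (2 * e)%:E)%E.
Proof.
move=> e0; rewrite lebesgue_measure_itv /=.
by case: ifP => _; rewrite ?lee_fin; lra.
Qed.
Lemma Qbound (R : realType) (a : R) (L r i Jn : nat) : 1 <= L%:R * (2 * a - 1) ->
  (16 * r * 2 ^ L <= 2 ^ Jn)%N ->
  ((((2 ^ L) ^ (Jn + i).+1 * r)%:R : R) * (2 * (((2 ^ L) ^ (Jn + i))%:R `^ a)^-1) ^+ 2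
    <= (1 / 2) / (2 ^ i.+1)%:R).
Proof.
move=> hL hJ.
set B := (2 ^ L)%N; set m := (Jn + i)%N.
set P := ((B ^ m)%:R : R) `^ a.
have Bm0 : (0 < B ^ m)%N by rewrite expn_gt0 expn_gt0.
have P0 : 0 < P by rewrite powR_gt0 // ltr0n.
have P2 : P ^+ 2 = ((B ^ m)%:R : R) `^ (2 * a).
  by rewrite /P -powR_mulrn ?powR_ge0 // -powRrM mulrC.
have hY := powB hL m; rewrite -/B -P2 in hY.
set Y := (2 ^ m * B ^ m)%N in hY.
have Y0 : (0 < Y)%N by rewrite muln_gt0 expn_gt0 Bm0.
have hN : (B ^ m.+1 * r * 4 * (4 * 2 ^ i) <= Y)%N.
  rewrite /Y /m expnS [(2 ^ (Jn + i))%N]expnD.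
  move: hJ; rewrite -/B; set X := (B ^ (Jn + i))%N; set Z := (2 ^ i)%N; set W := (2 ^ Jn)%N.
  move=> hJ.
  have -> : (B * X * r * 4 * (4 * Z) = (16 * r * B) * (Z * X))%N by ring.
  have -> : (W * Z * X = W * (Z * X))%N by ring.
  by rewrite leq_mul2r hJ orbT.
have e1 : (2 * P^-1) ^+ 2 = 4 / P ^+ 2 by rewrite exprMn exprVn -natrX.
rewrite e1.
apply: (@le_trans _ _ ((B ^ m.+1 * r)%:R * (4 / Y%:R))).
  apply: ler_wpM2l => //.
  rewrite ler_pM2l // lef_pV2 //; rewrite ?posrE ?ltr0n //.
  exact: exprn_gt0.
have hNR : ((B ^ m.+1 * r * 4 * (4 * 2 ^ i))%N%:R : R) <= Y%:R by rewrite ler_nat.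
rewrite mulrA ler_pdivrMr ?ltr0n //.
apply: (le_trans _ (ler_wpM2l _ hNR)); last by rewrite divr_ge0.
rewrite le_eqVlt; apply/orP; left; apply/eqP.
rewrite !natrM !natrX.
set X := (2 : R) ^+ L ^+ m.+1.
rewrite [(2 : R) ^+ i.+1]exprS.
have t0 : (2 : R) ^+ i != 0 by rewrite expf_neq0.
move: t0; set t := (2 : R) ^+ i => t0.
clearbody t X. field. by [].
Qed.
Definition Usq (R : realType) : set (R * R) :=
  (`[0%R, 1%R[%classic : set R) `*` (`[0%R, 1%R[%classic : set R).
Arguments Usq : clear implicits.

Lemma mu_U (R : realType) : ((@lebesgue_measure R) \x (@lebesgue_measure R))%E (Usq R) = 1%E.
Proof.
rewrite /Usq mu_rect; try exact: measurable_itv.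
by rewrite lebesgue_measure_itv /= lte_fin ltr01 /= oppr0 adde0 mule1.
Qed.

Definition q4 (R : realType) : 'I_4 -> R := fun _ => 1 / 4.
Definition Kq (R : realType) (k : 'I_4) : set R :=
  `[psum (@q4 R) k, psum (@q4 R) k + 1 / 4[.
Arguments Kq : clear implicits.
Definition Dcov (R : realType) : set (R * R) :=
  \big[setU/set0]_(k < 4) (Kq R k `*` Kq R k).
Arguments Dcov : clear implicits.

Lemma Dcov_meas (R : realType) : measurable (Dcov R).
Proof.
apply: bigsetU_measurable => k _; apply: measurableX; exact: measurable_itv.
Qed.

Lemma Dcov_le (R : realType) : (((@lebesgue_measure R) \x (@lebesgue_measure R))%E (Dcov R) <= (1 / 4 : R)%:E)%E.
Proof.
have := @subadd_ord _ _ _ (((@lebesgue_measure R) \x (@lebesgue_measure R))%E) 4 (fun k => Kq R k `*` Kq R k) (Dcov R).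
move=> /(_ (@Dcov_meas R)) h.
have mK : forall k : 'I_4, measurable (Kq R k `*` Kq R k).
  by move=> k; apply: measurableX; exact: measurable_itv.
apply: (le_trans (h mK (fun x hx => hx))).
rewrite (eq_bigr (fun _ => ((1 / 4) * (1 / 4) : R)%:E)); last first.
  move=> k _; apply: (eq_trans (mu_rect _ _)); try exact: measurable_itv.
  rewrite /Kq lebesgue_measure_itv /= lte_fin ltrDl ifT; last by [].
  by rewrite -EFinD -EFinM; congr (_%:E); ring.
rewrite big_const_ord /= -!EFinD addr0 lee_fin.
lra.
Qed.

Lemma Dcov_cover (R : realType) (x : R) : 0 <= x < 1 -> Dcov R (x, x).
Proof.
move=> /andP[x0 x1].
have [k hk] : exists k : 'I_4, psum (@q4 R) k <= x < psum (@q4 R) k + @q4 R k.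
  apply: (@cover_lem R 4 (@q4 R) x 4) => //.
  rewrite psum_n /q4 big_const_ord /=; lra.
rewrite /Dcov bigsetU_ordP; exists k => /=.
by rewrite /Kq /= in_itv /=; split.
Qed.
Lemma sum_constE (R : realType) n (c : R) :
  (\sum_(i < n) c%:E)%R = (n%:R * c)%:E.
Proof.
elim: n => [|n IH]; first by rewrite big_ord0 mul0r.
by rewrite big_ord_recr /= IH -EFinD -[n.+1]addn1 natrD mulrDl mul1r.
Qed.

Definition Wb (R : realType) r (pi : {perm 'I_r}) (l : 'I_r -> R) (eps : R) (k : nat) (e : 'I_r) : set R :=
  iter k.+1 (Pre pi l) (`](sg pi l e - eps)%R, (sg pi l e + eps)%R[%classic).

Definition Qs (R : realType) r (pi : {perm 'I_r}) (l : 'I_r -> R) (eps : R) (K : nat) : set (R * R) :=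
  \big[setU/set0]_(k < K) \big[setU/set0]_(e < r) (Wb pi l eps k e `*` Wb pi l eps k e).

Lemma Wb_meas (R : realType) r (pi : {perm 'I_r}) (l : 'I_r -> R) eps k e :
  measurable (Wb pi l eps k e).
Proof. by apply: PreN_meas; exact: measurable_itv. Qed.

Lemma Qs_meas (R : realType) r (pi : {perm 'I_r}) (l : 'I_r -> R) eps K :
  measurable (Qs pi l eps K).
Proof.
apply: bigsetU_measurable => k _; apply: bigsetU_measurable => e _.
by apply: measurableX; exact: Wb_meas.
Qed.

Lemma Qs_le (R : realType) r (pi : {perm 'I_r}) (l : 'I_r -> R) (T : R -> R) (H : is_iet_data pi l T) (eps : R) K :
  0 <= eps ->
  (((@lebesgue_measure R) \x (@lebesgue_measure R))%E (Qs pi l eps K)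
    <= ((K * r)%:R * (2 * eps) ^+ 2)%:E)%E.
Proof.
move=> e0.
have mX : forall k e, measurable (Wb pi l eps k e `*` Wb pi l eps k e).
  by move=> k e; apply: measurableX; exact: Wb_meas.
have mY : forall k : 'I_K, measurable (\big[setU/set0]_(e < r) (Wb pi l eps k e `*` Wb pi l eps k e)).
  by move=> k; apply: bigsetU_measurable => e _.
have := @subadd_ord _ _ _ (((@lebesgue_measure R) \x (@lebesgue_measure R))%E) K
  (fun k : 'I_K => \big[setU/set0]_(e < r) (Wb pi l eps k e `*` Wb pi l eps k e)) (Qs pi l eps K).
move=> /(_ (Qs_meas _ _ _ _) mY (fun x hx => hx)) h.
apply: (le_trans h).
rewrite natrM -mulrA -sum_constE.
apply: lee_sum => k _.
have := @subadd_ord _ _ _ (((@lebesgue_measure R) \x (@lebesgue_measure R))%E) r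
  (fun e => Wb pi l eps k e `*` Wb pi l eps k e) _ (mY k) (mX k) (fun x hx => hx).
move=> /le_trans; apply.
rewrite -sum_constE; apply: lee_sum => e _.
apply: (@le_trans _ _ (lebesgue_measure (Wb pi l eps k e) * lebesgue_measure (Wb pi l eps k e))%E).
  rewrite le_eqVlt; apply/orP; left; apply/eqP.
  exact: (mu_rect (Wb_meas _ _ _ _ _) (Wb_meas _ _ _ _ _)).
have hW : (lebesgue_measure (Wb pi l eps k e) <= (2 * eps)%:E)%E.
  apply: le_trans (@PreN_le R r pi l T H k.+1 _ (measurable_itv _)) (leb_ball _ e0).
rewrite expr2 EFinM; apply: lee_pmul => //; exact: measure_ge0.
Qed.
Lemma main_contra (R : realType) (r : nat) (pi : {perm 'I_r}) (l : 'I_r -> R) (T : R -> R)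
  (H : is_iet_data pi l T) (a : R) : 1 / 2 < a ->
  {ae ((@lebesgue_measure R) \x (@lebesgue_measure R))%E,
         forall z : R * R, (0 <= z.1 < 1) -> (0 <= z.2 < 1) ->
           limn_einf (fun n : nat =>
             ((n%:R `^ a) * `|iter n T z.1 - iter n T z.2|)%:E) = 0%E} -> False.
Proof.
move=> ha [N [mN N0 sN]].
have a0 : 0 < a by lra.
have [L hL] : exists L : nat, 1 <= L%:R * (2 * a - 1).
  have h2 : 0 < 2 * a - 1 by lra.
  have h3 : 0 < (2 * a - 1)^-1 by rewrite invr_gt0.
  have := @archi_boundP _ ((2 * a - 1)^-1) (ltW h3).
  rewrite -div1r ltr_pdivrMr // => h; exists (Num.Def.archi_bound (2 * a - 1)^-1).
  by move: h; rewrite div1r => /ltW.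
set B := (2 ^ L)%N.
have L0 : (0 < L)%N.
  by case: L hL {B} => // ; rewrite mul0r ler10.
have B1 : (1 < B)%N by rewrite /B -{1}(expn0 2) ltn_exp2l.
set Jn := (16 * r * B)%N.
have hJ : (16 * r * B <= 2 ^ Jn)%N by exact: ltnW (ltn_expl _ (ltnSn 1)).
set eps := fun m : nat => (((B ^ m)%:R : R) `^ a)^-1.
have eps0 m : 0 <= eps m by rewrite /eps invr_ge0 powR_ge0.
set Q := fun m : nat => Qs pi l (eps m) (B ^ m.+1).
set Big := \bigcup_i Q (Jn + i)%N.
have mBig : measurable Big.
  by apply: bigcup_measurable => i _; exact: Qs_meas.
have cov : Usq R `<=` N `|` (Dcov R `|` Big).
  move=> [x y] [/= hx hy].
  have hx' : 0 <= x < 1 by move: hx; rewrite /= in_itv.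
  have hy' : 0 <= y < 1 by move: hy; rewrite /= in_itv.
  case: (pselect (N (x, y))) => hNxy; first by left.
  right.
  have : (fun z : R * R => (0 <= z.1 < 1) -> (0 <= z.2 < 1) ->
           limn_einf (fun n : nat =>
             ((n%:R `^ a) * `|iter n T z.1 - iter n T z.2|)%:E) = 0%E) (x, y).
    by apply: contrapT => nP; apply: hNxy; apply: sN.
  move=> /(_ hx' hy') /= hP.
  case: (eqVneq x y) => [exy|xy].
    by left; rewrite -exy; exact: Dcov_cover.
  right.
  set del := `|x - y|.
  have d0 : 0 < del by rewrite normr_gt0 subr_eq0.
  set m1 := Num.Def.archi_bound ((del ^+ 2)^-1).
  have hm1 : (del ^+ 2)^-1 < m1%:R.
    by apply: archi_boundP; rewrite invr_ge0 exprn_ge0 // ltW.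
  have [n hn hlt] := einf0_lt1 hP (maxn (B ^ Jn) (B ^ m1)).
  move: hn; rewrite geq_max => /andP[hn1 hn2].
  have Bpos : forall k, (0 < B ^ k)%N by move=> k; rewrite expn_gt0 ltnW.
  have n0 : (0 < n)%N by exact: leq_trans (Bpos Jn) hn1.
  have mono : forall k : nat, (k <= n)%N -> (k%:R : R) `^ a <= n%:R `^ a.
    move=> k kn; apply: ge0_ler_powR; rewrite ?nnegrE ?ler_nat //; exact: ltW.
  have phin : 0 < (n%:R : R) `^ a by rewrite powR_gt0 // ltr0n.
  have sq : (del ^+ 2)^-1 < ((n%:R : R) `^ a) ^+ 2.
    apply: (lt_le_trans hm1).
    have h1 := powB hL m1; rewrite -/B in h1.
    have h2 : (((B ^ m1)%:R : R) `^ a) ^+ 2 = ((B ^ m1)%:R : R) `^ (2 * a).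
      by rewrite -powR_mulrn ?powR_ge0 // -powRrM mulrC.
    apply: (le_trans _ (lerXn2r 2 _ _ (mono _ hn2))); rewrite ?nnegrE ?powR_ge0 //.
    rewrite h2; apply: le_trans h1; rewrite ler_nat.
    apply: (leq_trans (ltnW (ltn_expl _ (ltnSn 1)))).
    by rewrite leq_pmulr // Bpos.
  have big1 : 1 < (n%:R : R) `^ a * del.
    move: sq; rewrite -div1r ltr_pdivrMr ?exprn_gt0 // -exprMn => sq.
    have hp : 0 < (n%:R : R) `^ a * del by rewrite mulr_gt0.
    move: hp sq; set w := _ * del => hp sq; nra.
  have hdn : `|iter n T x - iter n T y| < ((n%:R : R) `^ a)^-1.
    move: hlt; rewrite lte_fin => hlt.
    by rewrite -div1r ltr_pdivlMr // mulrC.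
  have dnd : `|iter n T x - iter n T y| < del.
    by apply: (lt_trans hdn); rewrite -div1r ltr_pdivrMr // mulrC.
  case: (last_change H x y n) => [e|[k [kn [hk e2]]]].
    by move: dnd; rewrite e /del ltxx.
  have hu := iterU H k hx'; have hv := iterU H k hy'.
  have [i hi] := coverI H hu; have [j hj] := coverI H hv.
  have ij : i != j.
    apply/eqP => eij; move/negP: hk; apply; apply/existsP; exists i.
    by rewrite /inI hi /= eij hj.
  set M := trunc_log B n.
  have := trunc_log_bounds B1 n0 => /andP[hM1 hM2].
  have JM : (Jn <= M)%N by apply: trunc_log_max.
  have hT : `|T (iter k T x) - T (iter k T y)| < eps M.
    rewrite [T (iter k T x) - _]e2 (lt_le_trans hdn) // /eps.
    rewrite lef_pV2 ?posrE ?powR_gt0 ?ltr0n ?Bpos //.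
    exact: mono.
  have [e [he1 he2]] := sep_lem H hi hj ij hT.
  exists (M - Jn)%N => //.
  rewrite /Q subnKC // /Qs bigsetU_ordP.
  have kM : (k < B ^ M.+1)%N by exact: ltn_trans kn hM2.
  exists (Ordinal kM); rewrite bigsetU_ordP; exists e; split.
  - apply: (PreN_mem H) => //; rewrite /= in_itv /=; exact: he1.
  - apply: (PreN_mem H) => //; rewrite /= in_itv /=; exact: he2.
have hBig : (((@lebesgue_measure R) \x (@lebesgue_measure R))%E Big <= (1 / 2 : R)%:E)%E.
  have hs := @measure_sigma_subadditive _ _ _ (((@lebesgue_measure R) \x (@lebesgue_measure R))%E)
    Big (fun i => Q (Jn + i)%N) (fun i => Qs_meas _ _ _ _) mBig (fun x hx => hx).
  apply: (le_trans hs).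
  apply: le_trans (epsilon_trick0 xpredT _); last by lra.
  apply: lee_nneseries => [i _ _|i _]; first exact: measure_ge0.
  apply: (le_trans (@Qs_le R r pi l T H (eps (Jn + i)%N) (B ^ (Jn + i).+1) (eps0 _))).
  rewrite lee_fin.
  have := @Qbound R a L r i Jn hL hJ.
  by rewrite /eps /B.
have mU : measurable (Usq R) by apply: measurableX; exact: measurable_itv.
have mDB : measurable (Dcov R `|` Big) by apply: measurableU => //; exact: Dcov_meas.
have mNDB : measurable (N `|` (Dcov R `|` Big)) by apply: measurableU.
have h1 := @le_measure _ _ _ (((@lebesgue_measure R) \x (@lebesgue_measure R))%E) _ _
  (mem_set mU) (mem_set mNDB) cov.
have h2 := @measureU2 _ _ _ (((@lebesgue_measure R) \x (@lebesgue_measure R))%E) _ _ mN mDB.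
have h3 := @measureU2 _ _ _ (((@lebesgue_measure R) \x (@lebesgue_measure R))%E) _ _ (@Dcov_meas R) mBig.
have h4 := Dcov_le R.
have := mu_U R.
move=> hU.
have h0 : (1%E <= ((@lebesgue_measure R) \x (@lebesgue_measure R))%E (Usq R))%E.
  by rewrite le_eqVlt; apply/orP; left; apply/eqP; symmetry; exact: hU.
have hN0 : (((@lebesgue_measure R) \x (@lebesgue_measure R))%E N <= 0)%E.
  by rewrite le_eqVlt; apply/orP; left; apply/eqP; exact: N0.
have := le_trans h0 (le_trans h1 (le_trans h2 (leeD hN0 (le_trans h3 (leeD h4 hBig))))).
rewrite add0e -EFinD lee_fin; lra.
Qed.

Theorem proposition7p1 (R : realType) (T : R -> R) :
  is_iet T -> (C_psi T <= (1 / 2 : R)%:E)%E.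
Proof.
move=> [r [pi [l H]]].
rewrite /C_psi; apply: ub_ereal_sup => _ [-> | [b [b0 hae] <-]].
- by rewrite lee_fin; lra.
- rewrite lee_fin; case: (lerP b (1 / 2)) => // hb.
  by exfalso; exact: (main_contra H hb hae).
Qed.
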